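(* Let $R$ be an $n^2\times n^2$ solution of the QYBE satisfying the Hecke condition $(PR-q)(PR+q^{-1})=0$, and regard $\Omega_q(R)$ as a superalgebra with $x_i$ even and $\mathrm dx_i$ odd. Let $\alpha,\beta,\gamma,\delta$ satisfy the relations of $GL_q^\Omega(1|1)$ and form, in the graded tensor product of $GL_q^\Omega(1|1)$ with $\Omega_q(R)$ (odd elements from different factors anticommuting, all other pairs commuting), $x_i'=\alpha x_i+\beta\,\mathrm dx_i$, $\mathrm dx_i'=\gamma x_i+\delta\,\mathrm dx_i$ for $i=1,\dots,n$. Then the $x_i',\mathrm dx_i'$ satisfy the same relations as the generators of $\Omega_q(R)$.
   Context: $P$ is the permutation matrix; repeated indices summed. $\Omega_q(R)$ is generated by $x_1,\dots,x_n,\mathrm dx_1,\dots,\mathrm dx_n$ with relations $x_ix_j=q^{-1}x_bx_aR^a{}_i{}^b{}_j$, $\mathrm dx_i\,x_j=q\,x_b\,\mathrm dx_aR^a{}_i{}^b{}_j$, $\mathrm dx_i\,\mathrm dx_j=-q\,\mathrm dx_b\,\mathrm dx_aR^a{}_i{}^b{}_j$. $GL_q^\Omega(1|1)$ is the super-Hopf algebra generated by $\alpha,\delta$ even and invertible and $\beta,\gamma$ odd with relations $\beta\alpha=\alpha\beta$, $\gamma\alpha=q^2\alpha\gamma$, $\delta\beta=\beta\delta$, $\delta\gamma=q^{-2}\gamma\delta$, $\gamma\beta=-q^2\beta\gamma$, $\delta\alpha-\alpha\delta=(1-q^2)\beta\gamma$, $\beta^2=\gamma^2=0$, with matrix super-coproduct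 on $\begin{pmatrix}\alpha&\beta\\\gamma&\delta\end{pmatrix}$. *)

(* Defs.v *)
From HB Require Import structures.
From mathcomp Require Import all_boot all_order all_algebra.
Set Implicit Arguments.
Unset Strict Implicit.
Unset Printing Implicit Defensive.
Import GRing.Theory.
Local Open Scope ring_scope.

(* V = K^n with basis indexed by 'I_n.  V (x) V is indexed by
   'I_(n*n) via mxvec_index a b (the pair (a,b)), and V (x) V (x) V by
   'I_(n*n*n) via mxvec_index (mxvec_index a b) c.
   The n^2 x n^2 matrix R has entries R^a_i^b_j := R_{(a,b),(i,j)}
   (upper indices = row, lower indices = column). *)

Section RDefs.
Variables (K : fieldType) (n : nat).

Definition Rent (R : 'M[K]_(n * n)) (a i b j : 'I_n) : K :=
  R (mxvec_index a b) (mxvec_index i j).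

Definition Pswap : 'M[K]_(n * n) :=
  \matrix_(u, v) \sum_(a < n) \sum_(b < n)
     ((u == mxvec_index a b) && (v == mxvec_index b a))%:R.

Definition ind3 (a b c : 'I_n) : 'I_(n * n * n) :=
  mxvec_index (mxvec_index a b) c.

Definition mx3 (f : 'I_n -> 'I_n -> 'I_n -> 'I_n -> 'I_n -> 'I_n -> K)
  : 'M[K]_(n * n * n) :=
  \matrix_(u, v) \sum_(a < n) \sum_(b < n) \sum_(c < n)
     \sum_(a' < n) \sum_(b' < n) \sum_(c' < n)
       ((u == ind3 a b c) && (v == ind3 a' b' c'))%:R * f a b c a' b' c'.

Definition R12 (R : 'M[K]_(n * n)) :=
  mx3 (fun a b c a' b' c' => Rent R a a' b b' * (c == c')%:R).
Definition R13 (R : 'M[K]_(n * n)) :=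
  mx3 (fun a b c a' b' c' => Rent R a a' c c' * (b == b')%:R).
Definition R23 (R : 'M[K]_(n * n)) :=
  mx3 (fun a b c a' b' c' => Rent R b b' c c' * (a == a')%:R).

Definition QYBE (R : 'M[K]_(n * n)) : Prop :=
  R12 R *m R13 R *m R23 R = R23 R *m R13 R *m R12 R.

Definition Hecke (q : K) (R : 'M[K]_(n * n)) : Prop :=
  (Pswap *m R - q%:M) *m (Pswap *m R + q^-1%:M) = 0.

Definition Omega_rels (A : algType K) (q : K) (R : 'M[K]_(n * n))
  (x dx : 'I_n -> A) : Prop :=
  forall i j : 'I_n,
    [/\ x i * x j = \sum_(a < n) \sum_(b < n) (q^-1 * Rent R a i b j) *: (x b * x a),
        dx i * x j = \sum_(a < n) \sum_(b < n) (q * Rent R a i b j) *: (x b * dx a)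
      & dx i * dx j = \sum_(a < n) \sum_(b < n) (- q * Rent R a i b j) *: (dx b * dx a)].

End RDefs.

(* defining relations of GL_q^Omega(1|1) (alpha, delta even invertible;
   beta, gamma odd) on elements of a K-algebra *)
Definition GLq11_rels (K : fieldType) (A : algType K) (q : K)
  (al be ga de : A) : Prop :=
  [/\ (exists al' : A, al * al' = 1 /\ al' * al = 1),
      (exists de' : A, de * de' = 1 /\ de' * de = 1),
      [/\ be * al = al * be,
          ga * al = q ^+ 2 *: (al * ga),
          de * be = be * de
        & de * ga = q ^- 2 *: (ga * de)],
      [/\ ga * be = - q ^+ 2 *: (be * ga)
        & de * al - al * de = (1 - q ^+ 2) *: (be * ga)]
    & be * be = 0 /\ ga * ga = 0].

(* commutation rules of the graded tensor product GL_q^Omega(1|1) (x) Omega_q(R):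
   elements from different factors commute, except that the odd ones
   (beta, gamma vs. dx_i) anticommute *)
Definition graded_mixing (K : fieldType) (A : algType K) (n : nat)
  (al be ga de : A) (x dx : 'I_n -> A) : Prop :=
  forall i : 'I_n,
    [/\ [/\ al * x i = x i * al, be * x i = x i * be,
            ga * x i = x i * ga & de * x i = x i * de],
        al * dx i = dx i * al, de * dx i = dx i * de,
        be * dx i = - (dx i * be)
      & ga * dx i = - (dx i * ga)].

(* Main.v *)
Require Import Defs.
From HB Require Import structures.
From mathcomp Require Import all_boot all_order all_algebra.
From mathcomp Require Import ring.
Import GRing.Theory.
Local Open Scope ring_scope.

Lemma mxvec_index_eq (n : nat) (a b c d : 'I_n) :
  (mxvec_index a b == mxvec_index c d) = (a == c) && (b == d).
Proof.
by rewrite /mxvec_index (inj_eq (@cast_ord_inj _ _ _)) (inj_eq (@enum_rank_inj _)) xpair_eqE.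
Qed.

Section S.
Variables (K : fieldType) (A : algType K) (n : nat) (q : K) (R : 'M[K]_(n * n)).
Hypothesis q0 : q != 0.

Definition idx := @mxvec_index n n.

Lemma sum_idx (F : 'I_(n * n) -> K) :
  \sum_u F u = \sum_(a < n) \sum_(b < n) F (mxvec_index a b).
Proof.
rewrite (reindex _ (curry_mxvec_bij _ _)) /= pair_big /=.
by apply: eq_bigr => -[a b] _.
Qed.

Lemma Pswap_row (b a : 'I_n) (w : 'I_(n * n)) :
  (Pswap K n) (mxvec_index b a) w = (w == mxvec_index a b)%:R.
Proof.
rewrite mxE (bigD1 b) //=.
rewrite [X in _ + X]big1; last first.
  move=> c; rewrite eq_sym => /negPf nc.
  by apply: big1 => d _; rewrite mxvec_index_eq nc.
rewrite addr0 (bigD1 a) //= [X in _ + X]big1; last first.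
  move=> d; rewrite eq_sym => /negPf nd.
  by rewrite mxvec_index_eq nd andbF.
by rewrite addr0 mxvec_index_eq !eqxx.
Qed.

Lemma PR_entry (b a : 'I_n) v :
  (Pswap K n *m R) (mxvec_index b a) v = R (mxvec_index a b) v.
Proof.
rewrite mxE (bigD1 (mxvec_index a b)) //= Pswap_row eqxx mul1r big1 ?addr0 //.
by move=> w /negPf nw; rewrite Pswap_row nw mul0r.
Qed.

Lemma Hecke_sq : Hecke q R ->
  (Pswap K n *m R) *m (Pswap K n *m R) = (q - q^-1) *: (Pswap K n *m R) + 1%:M.
Proof.
rewrite /Hecke; set M := Pswap K n *m R => H.
apply/eqP; rewrite -subr_eq0; apply/eqP; rewrite -H.
rewrite mulmxDr !mulmxBl mul_mx_scalar mul_scalar_mx mul_scalar_mx.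
rewrite scale_scalar_mx mulfV // scalerBl opprD opprB !addrA; congr (_ - _); apply: addrAC.

Qed.

Lemma exch4 (G : 'I_n -> 'I_n -> 'I_n -> 'I_n -> A) :
  \sum_(a < n) \sum_(b < n) \sum_(c < n) \sum_(d < n) G a b c d =
  \sum_(c < n) \sum_(d < n) \sum_(a < n) \sum_(b < n) G a b c d.
Proof.
under eq_bigr => a _ do rewrite exchange_big.
under eq_bigr => a _ do under eq_bigr => c _ do rewrite exchange_big.
rewrite exchange_big; apply: eq_bigr => c _; exact: exchange_big.
Qed.

Definition T (f : 'I_n -> 'I_n -> A) (i j : 'I_n) : A :=
  \sum_(a < n) \sum_(b < n) Rent R a i b j *: f b a.

Lemma MM_entry (c d i j : 'I_n) :
  ((Pswap K n *m R) *m (Pswap K n *m R)) (mxvec_index d c) (mxvec_index i j) =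
  \sum_(a < n) \sum_(b < n) Rent R c b d a * Rent R a i b j.
Proof.
rewrite mxE sum_idx exchange_big /=; apply: eq_bigr => a _; apply: eq_bigr => b _.
by rewrite !PR_entry.
Qed.

Lemma TT (H : Hecke q R) f i j : T (T f) i j = (q - q^-1) *: T f i j + f i j.
Proof.
rewrite /T.
transitivity (\sum_(a < n) \sum_(b < n) \sum_(c < n) \sum_(d < n)
   (Rent R c b d a * Rent R a i b j) *: f d c).
  apply: eq_bigr => a _; apply: eq_bigr => b _; rewrite scaler_sumr.
  apply: eq_bigr => c _; rewrite scaler_sumr; apply: eq_bigr => d _.
  by rewrite scalerA mulrC.
rewrite exch4.
transitivity (\sum_(c < n) \sum_(d < n)
   ((Pswap K n *m R) *m (Pswap K n *m R)) (mxvec_index d c) (mxvec_index i j) *: f d c).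
  apply: eq_bigr => c _; apply: eq_bigr => d _; rewrite MM_entry scaler_suml.
  by apply: eq_bigr => a _; rewrite scaler_suml.
rewrite Hecke_sq //.
have Ee u v : ((q - q^-1) *: (Pswap K n *m R) + 1%:M) u v =
    (q - q^-1) * (Pswap K n *m R) u v + (u == v)%:R.
  by rewrite [LHS]mxE [X in X + _]mxE [X in _ + X]mxE.
under eq_bigr => c _ do under eq_bigr => d _ do rewrite Ee PR_entry scalerDl -scalerA.
under eq_bigr => c _ do rewrite big_split /=.
rewrite big_split /=; congr (_ + _).
  rewrite /Rent scaler_sumr; apply: eq_bigr => c _; rewrite scaler_sumr.
  by apply: eq_bigr => d _.
rewrite (bigD1 j) //= [X in _ + X]big1; last first.
  move=> c /negPf nc; apply: big1 => d _.
  by rewrite mxvec_index_eq nc andbF scale0r.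
rewrite addr0 (bigD1 i) //= [X in _ + X]big1; last first.
  move=> d /negPf nd.
  by rewrite mxvec_index_eq nd scale0r.
by rewrite addr0 mxvec_index_eq !eqxx scale1r.
Qed.


Lemma eq_T f g i j : (forall b a, f b a = g b a) -> T f i j = T g i j.
Proof. by move=> E; apply: eq_bigr => a _; apply: eq_bigr => b _; rewrite E. Qed.

Lemma T_scale s f i j : T (fun b a => s *: f b a) i j = s *: T f i j.
Proof.
rewrite /T scaler_sumr; apply: eq_bigr => a _; rewrite scaler_sumr.
by apply: eq_bigr => b _; rewrite !scalerA mulrC.
Qed.

Lemma sumT s f i j :
  \sum_(a < n) \sum_(b < n) (s * Rent R a i b j) *: f b a = s *: T f i j.
Proof.
rewrite /T scaler_sumr; apply: eq_bigr => a _; rewrite scaler_sumr.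
by apply: eq_bigr => b _; rewrite !scalerA.
Qed.

Lemma T_lin4 (c1 c2 c3 c4 : A) f1 f2 f3 f4 i j :
  T (fun b a => c1 * f1 b a + c2 * f2 b a + c3 * f3 b a + c4 * f4 b a) i j =
  c1 * T f1 i j + c2 * T f2 i j + c3 * T f3 i j + c4 * T f4 i j.
Proof.
rewrite /T !mulr_sumr -!big_split; apply: eq_bigr => a _.
rewrite !mulr_sumr -!big_split; apply: eq_bigr => b _.
by rewrite !scalerDr !scalerAr.
Qed.

Lemma expand (u v w z xi xj dxi dxj : A) (sw sz : K) :
  xi * w = w * xi -> xi * z = z * xi ->
  dxi * w = sw *: (w * dxi) -> dxi * z = sz *: (z * dxi) ->
  (u * xi + v * dxi) * (w * xj + z * dxj) =
  (u * w) * (xi * xj) + (u * z) * (xi * dxj) + (sw *: (v * w)) * (dxi * xj)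
  + (sz *: (v * z)) * (dxi * dxj).
Proof.
move=> E1 E2 E3 E4; rewrite mulrDl !mulrDr addrA; congr (_ + _ + _ + _).
- by rewrite -!mulrA (mulrA xi) E1 -mulrA.
- by rewrite -!mulrA (mulrA xi) E2 -mulrA.
- by rewrite -!mulrA (mulrA dxi) E3 -!scalerAl -!scalerAr -!mulrA.
- by rewrite -!mulrA (mulrA dxi) E4 -!scalerAl -!scalerAr -!mulrA.
Qed.

Lemma final (s s1 s2 s3a s3b s4 : K) (c1 c2 c3 c4 l1 l2 l3 l4 xx xd dxx dd : A) :
  l1 = (s * s1) *: c1 -> l2 = (s * s3a) *: c3 ->
  l3 = (s * s2) *: c2 + (s * s3b) *: c3 -> l4 = (s * s4) *: c4 ->
  l1 * xx + l2 * xd + l3 * dxx + l4 * dd =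
  s *: (c1 * (s1 *: xx) + c2 * (s2 *: dxx) + c3 * (s3a *: xd + s3b *: dxx)
        + c4 * (s4 *: dd)).
Proof.
move=> -> -> -> ->; rewrite !mulrDr !scalerDr -!scalerAr !scalerA -!scalerAl mulrDl -!scalerAl.
congr (_ + _); rewrite -!addrA; congr (_ + _); exact: addrCA.
Qed.

Section Rels.
Variables (x dx : 'I_n -> A).
Hypothesis HR : Hecke q R.
Hypothesis HO : Omega_rels q R x dx.

Lemma TXX i j : T (fun b a => x b * x a) i j = q *: (x i * x j).
Proof.
have [E _ _] := HO i j; rewrite E sumT scalerA mulfV // scale1r //.
Qed.

Lemma TXD i j : T (fun b a => x b * dx a) i j = q^-1 *: (dx i * x j).
Proof.
have [_ E _] := HO i j; rewrite E sumT scalerA mulVf // scale1r //.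
Qed.

Lemma TDX i j : T (fun b a => dx b * x a) i j =
  q *: (x i * dx j) + (q - q^-1) *: (dx i * x j).
Proof.
rewrite (@eq_T _ (fun b a => q *: T (fun b a => x b * dx a) b a)); last first.
  by move=> b a; have [_ E _] := HO b a; rewrite E sumT.
rewrite T_scale TT // TXD scalerDr !scalerA addrC; congr (_ + _).
by rewrite mulrAC mulfV // mul1r.
Qed.

Lemma TDD i j : T (fun b a => dx b * dx a) i j = - q^-1 *: (dx i * dx j).
Proof.
have [_ _ E] := HO i j; rewrite E sumT scalerA mulrN mulNr mulVf // opprK scale1r //.
Qed.

Lemma gen_step (s sw sz sw' sz' : K) (u v w z u' v' w' z' : A) (i j : 'I_n) :
  (forall k, x k * w = w * x k) -> (forall k, x k * z = z * x k) ->
  (forall k, dx k * w = sw *: (w * dx k)) -> (forall k, dx k * z = sz *: (z * dx k)) ->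
  (forall k, x k * w' = w' * x k) -> (forall k, x k * z' = z' * x k) ->
  (forall k, dx k * w' = sw' *: (w' * dx k)) -> (forall k, dx k * z' = sz' *: (z' * dx k)) ->
  u * w = (s * q) *: (u' * w') ->
  u * z = (s * q) *: (sw' *: (v' * w')) ->
  sw *: (v * w) = (s * q^-1) *: (u' * z') + (s * (q - q^-1)) *: (sw' *: (v' * w')) ->
  sz *: (v * z) = (s * - q^-1) *: (sz' *: (v' * z')) ->
  (u * x i + v * dx i) * (w * x j + z * dx j) =
  \sum_(a < n) \sum_(b < n) (s * Rent R a i b j) *:
     ((u' * x b + v' * dx b) * (w' * x a + z' * dx a)).
Proof.
move=> h1 h2 h3 h4 h1' h2' h3' h4' e1 e2 e3 e4.
rewrite sumT (@eq_T _ (fun b a => (u' * w') * (x b * x a) + (u' * z') * (x b * dx a)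
   + (sw' *: (v' * w')) * (dx b * x a) + (sz' *: (v' * z')) * (dx b * dx a))); last first.
  by move=> b a; apply: expand.
rewrite T_lin4 TXX TXD TDX TDD (@expand _ _ _ _ _ _ _ _ sw sz) //.
exact: final.
Qed.
End Rels.

End S.


Theorem mainTheorem10 (K : fieldType) (A : algType K) (n : nat) (q : K)
  (R : 'M[K]_(n * n)) (al be ga de : A) (x dx : 'I_n -> A) :
  q != 0 ->
  QYBE R ->
  Hecke q R ->
  Omega_rels q R x dx ->
  GLq11_rels q al be ga de ->
  graded_mixing al be ga de x dx ->
  Omega_rels q R (fun i => al * x i + be * dx i) (fun i => ga * x i + de * dx i).
Proof.
move=> q0 _ HR HO [_ _ [r1 r2 r3 r4] [r5 r6] [bb gg]] HM i j.
have xal k : x k * al = al * x k by case: (HM k) => -[].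
have xbe k : x k * be = be * x k by case: (HM k) => -[].
have xga k : x k * ga = ga * x k by case: (HM k) => -[].
have xde k : x k * de = de * x k by case: (HM k) => -[].
have dal k : dx k * al = 1 *: (al * dx k) by case: (HM k) => _ -> *; rewrite scale1r.
have dde k : dx k * de = 1 *: (de * dx k) by case: (HM k) => _ _ -> *; rewrite scale1r.
have dbe k : dx k * be = -1 *: (be * dx k)
  by case: (HM k) => _ _ _ -> _; rewrite scaleN1r opprK.
have dga k : dx k * ga = -1 *: (ga * dx k)
  by case: (HM k) => _ _ _ _ ->; rewrite scaleN1r opprK.
have q2 : q ^+ 2 != 0 by rewrite expf_neq0.
split.
- apply: (@gen_step K A n q R q0 x dx HR HO (q^-1) (1) (-1) (1) (-1)) => //.
  + by rewrite mulVf // scale1r.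
  + by rewrite mulVf // !scale1r r1.
  + rewrite r1 !scale1r -scalerDl.
    have -> : q^-1 * q^-1 + q^-1 * (q - q^-1) = 1 by field.
    by rewrite scale1r.
  + by rewrite bb !scaler0.
- apply: (@gen_step K A n q R q0 x dx HR HO (q) (1) (-1) (-1) (1)) => //.
  + by rewrite r5 scalerA; congr (_ *: _); ring.
  + have E : de * al = al * de + (1 - q ^+ 2) *: (be * ga) by rewrite -r6 addrC subrK.
    by rewrite E scale1r mulfV // scale1r scalerA; congr (_ + _); congr (_ *: _); field.
  + by rewrite r3 scale1r; congr (_ *: _); field.
- apply: (@gen_step K A n q R q0 x dx HR HO (- q) (-1) (1) (-1) (1)) => //.
  + by rewrite gg scaler0.
  + rewrite r4 !scalerA.
    have -> : - q * q * -1 / q ^+ 2 = 1 by field.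
    by rewrite scale1r.
  + by rewrite r4 !scalerA -scalerDl; congr (_ *: _); field.
  + by rewrite !scale1r -[LHS]scale1r; congr (_ *: _); field.
Qed.
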